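(* Let $\mathcal{F}$ be a hypothesis class of functions $\mathcal{X}\to\{\pm1\}$ with finite VC dimension $d$, and $\mathcal{P}$ an unknown distribution on $\mathcal{X}\times\{\pm1\}$. Consider a run of Active-ILESS with accuracy parameter $\epsilon>0$ and confidence $\delta$, suppose the event $\mathcal{K}$ occurred, and suppose the run terminated because of the $\epsilon$ condition. Then the returned hypothesis $\hat f$ satisfies $R_{\mathcal{P}}(\hat f)\le R_{\mathcal{P}}(f^* )+\epsilon$, where $f^*$ is a true risk minimizer of $\mathcal{P}$.
   Context: $R_{\mathcal{P}}(f)=\Pr_{\mathcal{P}}[f(X)\ne Y]$; $\hat R(f,S)$ is the fraction of examples of $S$ misclassified by $f$; $f^*$ is any minimizer of $R_{\mathcal P}$ over $\mathcal{F}$. Slacks: for $n>0$, $\delta'\in(0,1)$, $A=4d\ln\frac{16ne}{d\delta'}$, $\hat\sigma_{R-\hat R}(n,\delta',d,\hat r)=\frac{A}{n}+\sqrt{\frac{A}{n}\hat r}$, $\bar\sigma_{R-\hat R}(n,\delta',d,r)=\sqrt{\frac{A}{n}r}$, $\bar\sigma_{\hat R-R}(n,\delta',d,r)=\frac{A}{n}+\sqrt{\frac{A}{n}r}$, $\hat\sigma_{\hat R-R}(n,\delta',d,\hat r)=\sqrt{\frac{A}{n}\hat r}$, $\sigma_{R-\hat R}=\min\{\hat\sigma_{R-\hat R}(\cdot,\hat r),\bar\sigma_{R-\hat R}(\cdot,r)\}$, $\sigma_{\hat R-R}=\min\{\bar\sigma_{\hat R-R}(\cdot,r),\hat\sigma_{\hat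 R-R}(\cdot,\hat r)\}$. $AGR(G)=\{x:\text{all }f\in G\text{ agree on }x\}$. Active-ILESS (inputs: $\epsilon$ and/or budget $m$, confidence $\delta$, $\mathcal{F}$, $d$, i.i.d. stream $x_1,x_2,\dots$ from $\mathcal{P}$): initialize $\hat S=\emptyset$, $G_0=\mathcal{F}$, $t=1$; for each $x_t$: if $x_t\in AGR(G_{t-1})$ do not request its label and set $y_t=f(x_t)$ for any $f\in G_{t-1}$, otherwise request the true label $y_t$; add $(x_t,y_t)$ to $\hat S$; let $\hat f$ be an ERM on $\hat S$; if $\log_2t\in\mathbb{N}$: set $\sigma_{\rm Active}=\hat\sigma_{R-\hat R}(\tfrac t2,\tfrac\delta{2t},d,\hat R(\hat f,\hat S))+\bar\sigma_{\hat R-R}\big(\tfrac t2,\tfrac\delta{2t},d,\hat R(\hat f,\hat S)+\hat\sigma_{R-\hat R}(\tfrac t2,\tfrac\delta{2t},d,\hat R(\hat f,\hat S))\big)$, terminate returning $\hat f$ if $\epsilon$ was given and $\sigma_{\rm Active}<\epsilon$ (the ''$\epsilon$ condition''), set $G_t=\{f:\hat R(f,\hat S)\le\hat R(\hat f,\hat S)+\sigma_{\rm Active}\}$ and reset $\hat S=\emptyset$; otherwise $G_t=G_{t-1}$; if $m$ was given and $t=m$ terminate returning $\hat f$; increment $t$. For $G\subseteq\mathcal{F}$, $\mathcal{P}(G)$ is the distribution of $(X,Y')$ with $(X,Y)\sim\mathcal{P}$, $Y'$ = common value of $G$ at $X$ if $X\in AGR(G)$ and $Y'=Y$ otherwise;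 $R_{\mathcal{P}(G)}(f)=\Pr[f(X)\ne Y']$. Event $\mathcal{K}$: for every $t=2^i$ reached and every $f\in\mathcal{F}$, with $\hat R(f)=\hat R(f,\hat S)$ for $\hat S$ at iteration $t$ before reset, $R_{\mathcal{P}(G_{t-1})}(f)\le\hat R(f)+\sigma_{R-\hat R}(\tfrac t2,\tfrac\delta{2t},d,R_{\mathcal{P}(G_{t-1})}(f),\hat R(f))$ and $\hat R(f)\le R_{\mathcal{P}(G_{t-1})}(f)+\sigma_{\hat R-R}(\tfrac t2,\tfrac\delta{2t},d,R_{\mathcal{P}(G_{t-1})}(f),\hat R(f))$. *)

(* Defs.v *)
From HB Require Import structures.
From Stdlib Require Import ClassicalEpsilon.
From mathcomp Require Import all_boot all_order all_algebra.
From mathcomp Require Import all_classical all_reals all_analysis.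
Set Implicit Arguments. Unset Strict Implicit. Unset Printing Implicit Defensive.
Import Order.TTheory GRing.Theory Num.Theory.
Local Open Scope classical_set_scope.
Local Open Scope ring_scope.

(* Labels {+1,-1} are represented by bool (true = +1, false = -1). *)

Definition shatters {X : Type} (F : set (X -> bool)) (A : list X) : Prop :=
  List.NoDup A /\
  forall b : X -> bool, exists2 f, F f & forall x, List.In x A -> f x = b x.

Definition VCdim {X : Type} (F : set (X -> bool)) (d : nat) : Prop :=
  (exists A, length A = d /\ shatters F A) /\
  (forall A, shatters F A -> (length A <= d)%N).

Section Slacks.
Variable R : realType.

Definition Aterm (n delta' : R) (d : nat) : R :=
  4 * d%:R * ln (16 * n * expR 1 / (d%:R * delta')).

Definition sig_hat_RmR (n delta' : R) (d : nat) (rh : R) : R :=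
  Aterm n delta' d / n + Num.sqrt (Aterm n delta' d / n * rh).
Definition sig_bar_RmR (n delta' : R) (d : nat) (r : R) : R :=
  Num.sqrt (Aterm n delta' d / n * r).
Definition sig_bar_hRmR (n delta' : R) (d : nat) (r : R) : R :=
  Aterm n delta' d / n + Num.sqrt (Aterm n delta' d / n * r).
Definition sig_hat_hRmR (n delta' : R) (d : nat) (rh : R) : R :=
  Num.sqrt (Aterm n delta' d / n * rh).

Definition sigma_RmR (n delta' : R) (d : nat) (r rh : R) : R :=
  Num.min (sig_hat_RmR n delta' d rh) (sig_bar_RmR n delta' d r).
Definition sigma_hRmR (n delta' : R) (d : nat) (r rh : R) : R :=
  Num.min (sig_bar_hRmR n delta' d r) (sig_hat_hRmR n delta' d rh).

Definition sigma_active (n delta' : R) (d : nat) (rh : R) : R :=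
  sig_hat_RmR n delta' d rh +
  sig_bar_hRmR n delta' d (rh + sig_hat_RmR n delta' d rh).
End Slacks.

Section Risks.
Variable R : realType.
Variable X : Type.

Definition emp_risk (f : X -> bool) (S : seq (X * bool)) : R :=
  (count (fun z => f z.1 != z.2) S)%:R / (size S)%:R.

Definition AGR (G : set (X -> bool)) : set X :=
  [set x | forall f g, G f -> G g -> f x = g x].

(* "f(x) for any f in G": a chosen element of G (arbitrary if G is empty) *)
Definition pickG (G : set (X -> bool)) : X -> bool :=
  epsilon (inhabits (fun _ => true)) (fun f => G f).

(* label used by P(G) and by the algorithm on agreement points *)
Definition relabel (G : set (X -> bool)) (x : X) (y : bool) : bool :=
  if `[< AGR G x >] then pickG G x else y.
End Risks.

Section Prob.
Variable R : realType.
Variable dX : measure_display.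
Variable X : measurableType dX.
Variable P : probability (X * bool)%type R.

Definition risk (f : X -> bool) : R :=
  fine (P [set z | f z.1 != z.2]).

Definition riskG (G : set (X -> bool)) (f : X -> bool) : R :=
  fine (P [set z | f z.1 != relabel G z.1 z.2]).
End Prob.

Definition is_pow2 (t : nat) : Prop := exists k, t = (2 ^ k)%N.

Section Run.
Variable R : realType.
Variable X : Type.
Variables (F : set (X -> bool)) (d : nat) (delta : R).
Variable xs : nat -> X.
Variable ys : nat -> bool.   (* true labels y_1, y_2, ... (revealed only when requested) *)
Variable erm : nat -> seq (X * bool) -> (X -> bool).

Record state := St {
  stG : set (X -> bool);
  stS : seq (X * bool);         (* S-hat after iteration t (after possible reset) *)
  stSpre : seq (X * bool);      (* S-hat at iteration t before reset *)
  stf : X -> bool;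
  stsig : R                     (* sigma_Active computed at iteration t (if t = 2^i) *)
}.

Definition step (t : nat) (s : state) : state :=
  let x := xs t in
  let y := relabel (stG s) x (ys t) in
  let S' := rcons (stS s) (x, y) in
  let fh := erm t S' in
  if `[< is_pow2 t >] then
    let sg := sigma_active (t%:R / 2) (delta / (2 * t%:R)) d (emp_risk R fh S') in
    St [set f | F f /\ emp_risk R f S' <= emp_risk R fh S' + sg] [::] S' fh sg
  else St (stG s) S' S' fh 0.

(* run t = state after iteration t; run 0 = initialization (G_0 = F) *)
Fixpoint run (t : nat) : state :=
  match t with
  | 0 => St F [::] [::] (fun _ => true) 0
  | t'.+1 => step t'.+1 (run t')
  end.
End Run.

(* Main.v *)
Require Import Defs.
From HB Require Import structures.
From Stdlib Require Import ClassicalEpsilon.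
From mathcomp Require Import all_boot all_order all_algebra.
From mathcomp Require Import all_classical all_reals all_analysis.
From mathcomp Require Import lra zify.
Import Order.TTheory GRing.Theory Num.Theory.
Local Open Scope classical_set_scope.
Local Open Scope ring_scope.

Lemma sqrt_mono (R : realType) (a r u : R) : 0 <= r -> r <= u ->
  Num.sqrt (a * r) <= Num.sqrt (a * u).
Proof.
move=> r0 ru; case: (leP 0 a) => ha.
  by apply: ler_wsqrtr; apply: ler_wpM2l.
by rewrite ler0_sqrtr ?sqrtr_ge0 //; nra.
Qed.

Lemma alg (R : realType) (n dl : R) (d : nat) (rh rs gh gs : R) :
  0 <= gs -> gs <= gh -> rh <= rs ->
  gh <= rh + sigma_RmR n dl d gh rh ->
  rs <= gs + sigma_hRmR n dl d gs rs ->
  gh <= gs + sigma_active n dl d rh /\ rs <= rh + sigma_active n dl d rh.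
Proof.
rewrite /sigma_RmR /sigma_hRmR /sigma_active => gs0 gsh rhs H1 H2.
have H1' : gh <= rh + sig_hat_RmR n dl d rh.
  by apply: (le_trans H1); rewrite lerD2l ge_min lexx.
have H2' : rs <= gs + sig_bar_hRmR n dl d gs.
  by apply: (le_trans H2); rewrite lerD2l ge_min lexx.
have gsu : gs <= rh + sig_hat_RmR n dl d rh by apply: le_trans H1'.
have mono : sig_bar_hRmR n dl d gs <= sig_bar_hRmR n dl d (rh + sig_hat_RmR n dl d rh).
  by rewrite /sig_bar_hRmR lerD2l; apply: sqrt_mono.
split; lra.
Qed.

Lemma mneq dX (X : measurableType dX) (h1 h2 : X * bool -> bool) :
  measurable_fun setT h1 -> measurable_fun setT h2 ->
  measurable [set z | h1 z != h2 z].
Proof.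
move=> m1 m2.
have -> : [set z | h1 z != h2 z] = (h1 @^-1` [set true] `&` h2 @^-1` [set false]) `|`
   (h1 @^-1` [set false] `&` h2 @^-1` [set true]).
  apply/funext => z; apply/propext; rewrite /preimage /setU /setI /=.
  by case: (h1 z); case: (h2 z) => /=; split => //; try (by left); try (by right); case=> [][].
have mp : forall (h : X * bool -> bool) (b : bool), measurable_fun setT h -> measurable (h @^-1` [set b]).
  move=> h b mh; have := mh measurableT [set b]; rewrite setTI; apply; done.
by apply: measurableU; apply: measurableI; apply: mp.
Qed.

Lemma transfer (R : realType) dX (X : measurableType dX) (P : probability (X * bool)%type R)
  (F G : set (X -> bool)) (fs : X -> bool)
  (HF : forall f, F f -> measurable_fun setT f) (HGF : G `<=` F) (Gfs : G fs)
  (HA : measurable (AGR G)) :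
  (forall f, F f -> risk P f <= riskG P G f +
      fine (P ((AGR G `*` setT) `&` [set z | pickG G z.1 != z.2]))) /\
  risk P fs = riskG P G fs + fine (P ((AGR G `*` setT) `&` [set z | pickG G z.1 != z.2])).
Proof.
set g0 := pickG G.
have Gg0 : G g0 by apply: epsilon_spec; exists fs.
have Fg0 := HGF _ Gg0.
have mf : forall f, F f -> measurable_fun setT (fun z : X * bool => f z.1).
  by move=> f Ff; exact: (measurableT_comp (HF f Ff) measurable_fst).
have msnd : measurable_fun setT (fun z : X * bool => z.2) by exact: measurable_snd.
have mA : measurable (AGR G `*` @setT bool) by apply: measurableX.
set A' := AGR G `*` setT.
set C := A' `&` [set z | g0 z.1 != z.2].
have mC : measurable C by apply: measurableI; [exact: mA|apply: mneq => //; exact: (mf _ Fg0)].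
have fin : forall S, measurable S -> P S \is a fin_num.
  by move=> S mS; apply: fin_num_measure.
have E'eq : forall f, [set z | f z.1 != relabel G z.1 z.2] =
    (A' `&` [set z | f z.1 != g0 z.1]) `|` (~` A' `&` [set z | f z.1 != z.2]).
  move=> f; apply/funext => z; apply/propext; rewrite /relabel /A' /setU /setI /setC /setX /=.
  case: asboolP => hz; split.
  - by move=> h; left.
  - by case=> [[_ h]|[hn _]] //; exfalso; apply: hn.
  - by move=> h; right; split => // -[].
  - by case=> [[[]]|[_ h]].
have mE' : forall f, F f -> measurable [set z | f z.1 != relabel G z.1 z.2].
  move=> f Ff; rewrite E'eq; apply: measurableU; apply: measurableI.
  - exact: mA.
  - exact: (@mneq _ _ (fun z : X * bool => f z.1) (fun z : X * bool => g0 z.1) (mf _ Ff) (mf _ Fg0)).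
  - exact: measurableC.
  - exact: (@mneq _ _ (fun z : X * bool => f z.1) (fun z : X * bool => z.2) (mf _ Ff) msnd).
have mE : forall f, F f -> measurable [set z | f z.1 != z.2].
  by move=> f Ff; exact: (@mneq _ _ (fun z : X * bool => f z.1) (fun z : X * bool => z.2) (mf _ Ff) msnd).
split.
  move=> f Ff; rewrite /risk /riskG -fineD ?fin //; last exact: mE'.
  have sub : [set z | f z.1 != z.2] `<=` [set z | f z.1 != relabel G z.1 z.2] `|` C.
    move=> z /= h; rewrite /relabel /C /A' /setU /setI /setX /=.
    case: asboolP => hz; last by left.
    by case: (boolP (f z.1 == g0 z.1)) => e; [right; split => //; rewrite -(eqP e)|left].
  apply: fine_le.
  - exact: fin _ (mE _ Ff).
  - by rewrite fin_numD !fin //; exact: mE'.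
  apply: le_trans (measureU2 P (mE' _ Ff) mC).
  apply: le_measure => //; rewrite inE; [exact: mE| apply: measurableU => //; exact: mE'].
have Ffs := HGF _ Gfs.
have agr : forall z, AGR G z -> fs z = g0 z by move=> z hz; apply: hz.
have eqU : [set z | fs z.1 != z.2] = [set z | fs z.1 != relabel G z.1 z.2] `|` C.
  apply/funext => z; apply/propext; rewrite /relabel /C /A' /setU /setI /setX /=.
  case: asboolP => hz; last first.
    by split; [left|case=> // -[[h _] _]; exfalso; exact: hz h].
  rewrite agr //; split; first by move=> h; right.
  by case=> [h|[_ h]] //; move: h; rewrite /g0 eqxx.
have disj : [set z | fs z.1 != relabel G z.1 z.2] `&` C = set0.
  apply/seteqP; split => // z; rewrite /relabel /C /A' /setI /setX /=.
  by case: asboolP => hz [h [[hz' _] _]] //; move: h; rewrite agr // eqxx.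
rewrite /risk /riskG eqU measureU ?fineD ?fin //; exact: mE'.
Qed.

Lemma run_pow2 (R : realType) (X : Type) (F : set (X -> bool)) (d : nat) (delta : R)
  xs ys erm (t : nat) : is_pow2 t.+1 ->
  let s := run F d delta xs ys erm t.+1 in
  stG s = [set f | F f /\ emp_risk R f (stSpre s) <= emp_risk R (stf s) (stSpre s) + stsig s] /\
  stsig s = sigma_active (t.+1%:R / 2) (delta / (2 * t.+1%:R)) d (emp_risk R (stf s) (stSpre s)).
Proof. by move=> hp /=; rewrite /step; case: asboolP. Qed.

Lemma run_npow2 (R : realType) (X : Type) (F : set (X -> bool)) (d : nat) (delta : R)
  xs ys erm (t : nat) : ~ is_pow2 t.+1 ->
  stG (run F d delta xs ys erm t.+1) = stG (run F d delta xs ys erm t).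
Proof. by move=> hp /=; rewrite /step; case: asboolP. Qed.
Theorem lemma12 (R : realType) (dX : measure_display) (X : measurableType dX)
  (P : probability (X * bool)%type R)
  (F : set (X -> bool)) (d : nat)
  (HFmeas : forall f, F f -> measurable_fun setT f)
  (Hvc : VCdim F d)
  (eps delta : R) (Heps : 0 < eps) (Hdelta : 0 < delta < 1)
  (m : option nat)
  (xs : nat -> X) (ys : nat -> bool)
  (erm : nat -> seq (X * bool) -> (X -> bool))
  (T : nat)
  (* f-hat is an ERM over F on S-hat at every iteration up to termination *)
  (Herm : forall t, (0 < t <= T)%N ->
     F (stf (run F d delta xs ys erm t)) /\
     forall f, F f ->
       emp_risk R (stf (run F d delta xs ys erm t)) (stSpre (run F d delta xs ys erm t))
       <= emp_risk R f (stSpre (run F d delta xs ys erm t)))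
  (* measurability of the agreement regions of the G_t used *)
  (HAGRmeas : forall t, (t < T)%N -> measurable (AGR (stG (run F d delta xs ys erm t))))
  (* the run terminated at iteration T because of the epsilon condition *)
  (HTpow : is_pow2 T)
  (HTeps : stsig (run F d delta xs ys erm T) < eps)
  (HTfirst : forall t, (0 < t < T)%N -> is_pow2 t ->
     eps <= stsig (run F d delta xs ys erm t))
  (HTbudget : forall mm, m = Some mm -> (T <= mm)%N)
  (* event K *)
  (HK : forall t, (0 < t <= T)%N -> is_pow2 t -> forall f, F f ->
     let G := stG (run F d delta xs ys erm t.-1) in
     let Rh := emp_risk R f (stSpre (run F d delta xs ys erm t)) in
     let n := t%:R / 2 in
     let dl := delta / (2 * t%:R) in
     riskG P G f <= Rh + sigma_RmR n dl d (riskG P G f) Rh /\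
     Rh <= riskG P G f + sigma_hRmR n dl d (riskG P G f) Rh)
  (fstar : X -> bool) (Hfstar : F fstar)
  (Hmin : forall f, F f -> risk P fstar <= risk P f) :
  risk P (stf (run F d delta xs ys erm T)) <= risk P fstar + eps.
Proof.
set r := run F d delta xs ys erm.
have key : forall t, (0 < t <= T)%N -> is_pow2 t ->
    stG (r t.-1) fstar -> stG (r t.-1) `<=` F ->
    riskG P (stG (r t.-1)) (stf (r t)) <= riskG P (stG (r t.-1)) fstar + stsig (r t) /\
    emp_risk R fstar (stSpre (r t)) <= emp_risk R (stf (r t)) (stSpre (r t)) + stsig (r t).
  move=> [|t] ht hp Gs GF; first by move: ht; rewrite ltnn.
  have [Ffh Herm'] := Herm _ ht.
  have mA : measurable (AGR (stG (r t))).
    by apply: HAGRmeas; move: ht => /andP[_ ?]; lia.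
  have [tr eq] := @transfer _ _ _ P _ _ _ HFmeas GF Gs mA.
  have gsh : riskG P (stG (r t)) fstar <= riskG P (stG (r t)) (stf (r t.+1)).
    have := tr _ Ffh; have := Hmin _ Ffh; rewrite eq; lra.
  have K1 := HK _ ht hp _ Ffh; have K2 := HK _ ht hp _ Hfstar.
  cbv zeta in K1, K2.
  have [_ esig] := @run_pow2 R X F d delta xs ys erm _ hp.
  rewrite -/r in esig; rewrite esig.
  apply: alg.
  - exact: fine_ge0 (measure_ge0 _ _).
  - exact: gsh.
  - exact: Herm' _ Hfstar.
  - exact: K1.1.
  - exact: K2.2.
have inv : forall t, (t < T)%N -> stG (r t) fstar /\ stG (r t) `<=` F.
  elim=> [|t IH] hT; first by split.
  have [G1 G2] := IH (ltnW hT).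
  case: (pselect (is_pow2 t.+1)) => hp; last by rewrite /r run_npow2.
  have [eG _] := @run_pow2 R X F d delta xs ys erm _ hp; rewrite -/r in eG; rewrite eG; split; last by move=> f [].
  split => //.
  have ht : (0 < t.+1 <= T)%N by apply/andP; split => //; exact: ltnW.
  exact: (key _ ht hp G1 G2).2.
have [k Tk] := HTpow.
have T0 : (0 < T)%N by rewrite Tk expn_gt0.
have ht : (0 < T <= T)%N by rewrite T0 leqnn.
have [G1 G2] : stG (r T.-1) fstar /\ stG (r T.-1) `<=` F by apply: inv; lia.
have [k1 _] := key _ ht HTpow G1 G2.
have [Ffh _] := Herm _ ht.
have mA : measurable (AGR (stG (r T.-1))) by apply: HAGRmeas; lia.
have [tr eq] := @transfer _ _ _ P _ _ _ HFmeas G2 G1 mA.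
have := tr _ Ffh; rewrite eq; lra.
Qed.
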